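(* Let $K$ be a finite triangulation of a 2-stratifold $X(\mathcal{M},\mathcal{C})$ and run the algorithm described below on $K$. Then each graph $G_{i,j}$ constructed in step (1.1.4) for the polygon $P_{i,j}$ is a tree.
   Context: A (finite) 2-stratifold $X=X(\mathcal{M},\mathcal{C})$ is a compact connected Hausdorff space obtained from a finite collection $\mathcal{C}$ of circles and a finite collection $\mathcal{M}=\{\mathbb{M}_1,\dots,\mathbb{M}_n\}$ of compact connected surfaces with boundary by attaching each boundary component of each $\mathbb{M}_i$ to exactly one circle via a covering map $\mathbb{S}^1\to\mathbb{S}^1$, where for each circle the sum of the absolute values of the degrees of the maps attached to it exceeds $2$. Let $\rho:\bigsqcup_i\mathbb{M}_i\to X$ be the quotient map; any triangulation $K$ of $X$ contains the circles in its 1-skeleton and is obtained by triangulating each $\mathbb{M}_i$ as a polygon with identified sides and identifying boundaries; $K_i$ denotes the subcomplex $\rho(\mathbb{M}_i)$. A vertex is a boundary vertex if it lies in $\rho(\partial\mathbb{M}_i)$ for some $i$, and internal otherwise. An edge is a boundary edge if it lies in some $\rho(\partial\mathbb{M}_i)$; a crossing edge if both endpoints are boundary vertices but it is not a boundary edge; a bridge edge if it joins an internal vertex to a boundary vertex; an internal edge if both endpoints are internal. The crossing edges subdivide the polygon of $K_i$ into sub-polygons $P_{i,1},\dots,P_{i,r_i}$ with no crossing edges in their interiors. Algorithm: (1) For each $i$: (1.1) for each $j\le r_i$: (1.1.1) let $H_{i,j}$ be the graph formed by the internal vertices and internal edges of $P_{i,j}$ together with one boundary vertex $b_{i,j}$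 of $P_{i,j}$ and one bridge edge joining it to them; (1.1.2) choose a spanning tree $S_{i,j}$ of $H_{i,j}$; (1.1.3) let $V_{i,j}$ be the set of pairs $(w,e)$ with $e$ an edge of $S_{i,j}$ and $w$ the endpoint of $e$ farther from $b_{i,j}$ in $S_{i,j}$; (1.1.4) let $G_{i,j}$ be the graph whose vertices are the 2-simplices of $P_{i,j}$, with one edge joining two 2-simplices for each edge of $K$ they share that is not on the boundary of $P_{i,j}$ (not a boundary or crossing edge) and is not an edge of $S_{i,j}$. (1.2) Let $T_i$ be obtained from $G_{i,1}\sqcup\dots\sqcup G_{i,r_i}$ by adding, for each crossing edge of $K_i$, an edge joining the two 2-simplices containing it. (1.3) Choose a 2-simplex $F_{i,0}$ of $K_i$ and let $V_{T_i}$ be the set of pairs $(e,F(e))$, where $e$ runs over the edges of $K$ corresponding to edges of $T_i$ and $F(e)$ is the endpoint of that edge of $T_i$ farther from $F_{i,0}$ in $T_i$. (2) Let $B$ be the graph of all boundary vertices and boundary edges of $K$; choose a spanning tree and a root, and let $V_B$ be the set of pairs $(w,e)$ with $e$ in the spanning tree and $w$ the endpoint of $e$ farther from the root. (3) Output $V=V_B\cup\bigcup_i V_{T_i}\cup\bigcup_{i,j}V_{i,j}$. *)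

(* Defs.v *)
From mathcomp Require Import all_boot.
Set Implicit Arguments. Unset Strict Implicit. Unset Printing Implicit Defensive.

Section Graphs.
Variable T : finType.

Definition restr (A : {set T}) (r : rel T) : rel T :=
  fun x y => [&& x \in A, y \in A & r x y].

Definition connectedb (A : {set T}) (r : rel T) : bool :=
  [forall x in A, forall y in A, connect (restr A r) x y].

Definition has_cycle (A : {set T}) (r : rel T) : Prop :=
  exists s : seq T, [/\ uniq s, 3 <= size s, all (mem A) s & cycle r s].

Definition is_tree (A : {set T}) (r : rel T) : Prop :=
  [/\ A != set0, connectedb A r & ~ has_cycle A r].

Definition eadj (E : {set {set T}}) : rel T :=
  fun x y => (x != y) && ([set x; y] \in E).
End Graphs.

Section Polygon.
Variable V : finType.
Variable F : {set {set V}}.   (* the 2-simplices *)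

Definition edges : {set {set V}} :=
  [set e : {set V} | (#|e| == 2) && [exists t in F, e \subset t]].

Definition edeg (e : {set V}) : nat := #|[set t in F | e \subset t]|.

Definition bedge (e : {set V}) : bool := (e \in edges) && (edeg e == 1).
Definition iedge (e : {set V}) : bool := (e \in edges) && (edeg e == 2).

Definition bvert (v : V) : bool := [exists e, bedge e && (v \in e)].
Definition ivert (v : V) : bool := ~~ bvert v.

Definition link_verts (v : V) : {set V} :=
  [set u | (u != v) && ([set v; u] \in edges)].
Definition link_adj (v : V) : rel V :=
  fun u w => (u != w) && ([set v; u; w] \in F).

Definition dual_adj : rel {set V} :=
  fun t1 t2 => (t1 != t2) && (#|t1 :&: t2| == 2).

(* F is a (simplicial) triangulation of a polygon, i.e. of a closed 2-disk:
   a connected combinatorial surface (every edge in one or two triangles,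
   every vertex link connected, hence a path or a cycle) with nonempty
   boundary and Euler characteristic 1.  By the classification of compact
   surfaces these are exactly the triangulated disks. *)
Definition triangulated_polygon : Prop :=
  [/\ forall t, t \in F -> #|t| == 3,
      forall v : V, exists2 t, t \in F & v \in t,
      forall e, e \in edges -> (edeg e == 1) || (edeg e == 2),
      forall v, connectedb (link_verts v) (link_adj v)
    & [/\ connectedb F dual_adj,
           exists e, bedge e
         & #|V| + #|F| = #|edges| + 1]].

Definition no_interior_crossing : Prop :=
  forall e, iedge e -> [exists v in e, ivert v].

Definition internal_edge (e : {set V}) : bool :=
  (e \in edges) && [forall v in e, ivert v].
Definition bridge_edge (e : {set V}) : bool :=
  [&& e \in edges, [exists v in e, ivert v] & [exists v in e, bvert v]].

(* the graph H_{i,j} of step (1.1.1), for the chosen boundary vertex b and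
   chosen bridge edge e0 (e0 is only used when there are internal vertices) *)
Definition H_verts (b : V) : {set V} := b |: [set v | ivert v].
Definition H_edges (e0 : {set V}) : {set {set V}} :=
  [set e | internal_edge e || ((e == e0) && bridge_edge e0)].

(* the graph G_{i,j} of step (1.1.4): vertices the 2-simplices of F, two of
   them adjacent when they share an edge (necessarily not on the boundary of
   the polygon) which is not an edge of S *)
Definition G_adj (S : {set {set V}}) : rel {set V} :=
  fun t1 t2 => dual_adj t1 t2 && (t1 :&: t2 \notin S).
End Polygon.

(* Main.v *)
Require Import Defs.
From mathcomp Require Import zify.
From mathcomp Require Import all_boot.
Set Implicit Arguments. Unset Strict Implicit. Unset Printing Implicit Defensive.

Lemma tree_parent (T : finType) (A : {set T}) (r : rel T) (x0 : T) :
  x0 \in A -> connectedb A r ->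
  exists (p : T -> T) (d : T -> nat), forall v, v \in A -> v != x0 ->
    [/\ p v \in A, r (p v) v & d (p v) < d v].
Proof.
move=> x0A /forall_inP conn.
pose P v n := [exists s : n.-tuple T, path (restr A r) x0 s && (last x0 s == v)].
have hex : forall v, exists n, (v \in A) ==> P v n.
  move=> v; case vA: (v \in A); last by exists 0.
  have := conn _ x0A => /forall_inP /(_ _ vA) /connectP [s ps ->].
  exists (size s); apply/existsP; exists (in_tuple s) => /=; rewrite ps eqxx.
  done.
pose d v := ex_minn (hex v).
have dP : forall v n, v \in A -> P v n -> d v <= n.
  move=> v n vA Pn; rewrite /d; case: ex_minnP => m _ /(_ n); apply.
  by rewrite vA.
have dE : forall v, v \in A -> P v (d v).
  move=> v vA; rewrite /d; case: ex_minnP => m; by rewrite vA.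
exists (fun v => odflt x0 [pick u | (u \in A) && r u v && (d u < d v)]), d.
move=> v vA vx0.
case: pickP => [u /= /andP[/andP[-> ->] ->] // | none].
exfalso.
have /existsP [s /andP [ps /eqP ls]] := dE v vA.
move: ps ls; case/lastP E: (tval s) => [|s' w].
  by move=> _ /= ev; rewrite ev eqxx in vx0.
rewrite rcons_path last_rcons => /andP [ps' rw] ew; subst w.
move: rw => /and3P [uA _ ruv].
have := none (last x0 s'); rewrite uA ruv /=.
have Pu : P (last x0 s') (size s').
  apply/existsP; exists (in_tuple s'); by rewrite /= ps' eqxx.
have := dP _ _ uA Pu.
have : size (rcons s' v) = d v by rewrite -E size_tuple.
rewrite size_rcons => <- H; by rewrite ltnS H.
Qed.
Lemma parent_inj (T : finType) (A : {set T}) (x0 : T) (p : T -> T) (d : T -> nat) :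
  (forall v, v \in A -> v != x0 -> d (p v) < d v) ->
  {in A :\ x0 &, injective (fun v => [set v; p v])}.
Proof.
move=> H v w /setD1P [vx0 vA] /setD1P [wx0 wA] /= E.
apply/eqP; apply/negP => /negP vw.
have : v \in [set w; p w] by rewrite -E set21.
have : w \in [set v; p v] by rewrite E set21.
rewrite !inE (eq_sym w v) (negbTE vw) /= => /eqP wp /eqP vp.
have := H v vA vx0; have := H w wA wx0.
rewrite -{1}wp -{1}vp => h1 h2.
by have := ltn_trans h1 h2; rewrite ltnn.
Qed.

Lemma parent_card (T : finType) (A : {set T}) (x0 : T) (p : T -> T) (d : T -> nat) :
  x0 \in A ->
  (forall v, v \in A -> v != x0 -> d (p v) < d v) ->
  #|[set [set v; p v] | v in A :\ x0]| = #|A| - 1.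
Proof.
move=> x0A H; rewrite card_in_imset; last exact: parent_inj H.
by rewrite (cardsD1 x0 A) x0A add1n subn1.
Qed.
Lemma eadj_sym (T : finType) (E : {set {set T}}) x y : eadj E x y = eadj E y x.
Proof. by rewrite /eadj eq_sym setUC. Qed.

Lemma forest_odd (T : finType) (A : {set T}) (S D : {set {set T}}) (b : T) :
  ~ has_cycle A (eadj S) ->
  (forall e, e \in S -> e \subset A) ->
  D \subset S -> (forall e, e \in D -> #|e| = 2) -> D != set0 ->
  exists2 z, z != b & odd #|[set u | [set z; u] \in D]|.
Proof.
move=> nocyc SA DS D2 Dn0.
pose r := eadj D.
have rS : subrel r (eadj S).
  by move=> x y /andP [xy /(subsetP DS) h]; rewrite /eadj xy h.
pose P n := [exists s : n.-tuple T, uniq s && sorted r s].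
have exP : exists n, P n.
  case/set0Pn: Dn0 => e eD; have /eqP/cards2P [x [y [xy ee]]] := D2 e eD.
  exists 2; apply/existsP; exists [tuple x; y] => /=.
  by rewrite /= !inE xy /r /eadj xy -ee eD.
have ubP : forall n, P n -> n <= #|T|.
  move=> n /existsP [s /andP [us _]].
  by rewrite -(size_tuple s) -(card_uniqP us) max_card.
case: (ex_maxnP exP ubP) => n Pn maxn.
have key : forall s x y s2, uniq s -> sorted r s -> size s = n -> s = x :: y :: s2 ->
    [set u | [set x; u] \in D] = [set y].
  move=> s x y s2 us ss sn se; apply/setP => u; rewrite !inE.
  case: (eqVneq u y) => [-> | uy].
    by move: ss; rewrite se /= => /andP [/andP [_ ->]].
  apply/negP => xuD.
  have ux : u != x.
    apply/negP => /eqP ux; move: (D2 _ xuD); rewrite ux setUid cards1 //.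
  case us': (u \in s).
    have us2 : u \in s2 by move: us'; rewrite se !inE (negbTE ux) (negbTE uy).
    move: ss us; rewrite se; case/splitPr: us2 => p1 p2 ss us.
    apply: nocyc; exists (x :: y :: p1 ++ [:: u]).
    have hc : cycle (eadj S) (x :: y :: p1 ++ [:: u]).
      rewrite /= rcons_cat /=.
      move: ss => /= /andP [rxy].
      rewrite cat_path /= => /andP [pp /andP [rlu _]].
      rewrite (rS _ _ rxy) /= cat_path /= (sub_path rS pp) (rS _ _ rlu) /=.
      by rewrite /eadj ux setUC (subsetP DS _ xuD).
    split => //.
    - apply: subseq_uniq us.
      have -> : x :: y :: p1 ++ u :: p2 = (x :: y :: p1 ++ [:: u]) ++ p2
        by rewrite /= -catA.
      exact: prefix_subseq.
    - by rewrite /= size_cat /= addn1.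
    - apply/allP => z zc; have := next_cycle hc zc => /andP [_ /SA /subsetP].
      by apply; rewrite !inE eqxx.
  have : P n.+1.
    rewrite -sn; apply/existsP; exists (in_tuple (u :: s)) => /=.
    rewrite us' us /=; move: ss; rewrite se /= => ->.
    by rewrite /r /eadj ux setUC xuD.
  by move/maxn; rewrite ltnn.
case/existsP: Pn => s /andP [us ss].
have sn := size_tuple s.
have n2 : 2 <= n.
  case/set0Pn: Dn0 => e eD; have /eqP/cards2P [x [y [xy ee]]] := D2 e eD.
  apply: maxn; apply/existsP; exists [tuple x; y] => /=.
  by rewrite /= !inE xy /r /eadj xy -ee eD.
case E: (tval s) sn => [|x [|y s2]] //= sn; try by rewrite -sn in n2.
have k1 := key _ x y s2 us ss (size_tuple s) E.
have hr : size (rev s) = n by rewrite size_rev size_tuple.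
have usr : uniq (rev s) by rewrite rev_uniq.
have ssr : sorted r (rev s).
  have hsym : (fun z => r^~ z) =2 r by move=> c d; rewrite /r eadj_sym.
  by rewrite rev_sorted; move: ss; case: (tval s) => //= a l; rewrite (eq_path hsym).
case Er: (rev s) => [|x' [|y' s2']]; try by move: hr; rewrite Er => hr; rewrite -hr in n2.
have k2 := key _ x' y' s2' usr ssr hr Er.
have xx' : x != x'.
  have : last x s = x' by rewrite -(revK s) Er rev_cons last_rcons.
  rewrite E /= => <-.
  move: us; rewrite E cons_uniq => /andP [xn _].
  by apply/eqP => ex; move: xn; rewrite ex mem_last.
case: (eqVneq x b) => [xb | xb]; last by exists x => //; rewrite k1 cards1.
exists x'; last by rewrite k2 cards1.
by rewrite -xb eq_sym.
Qed.
Lemma card_sumb (T : finType) (X : {set T}) (P : pred T) :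
  #|[set t in X | P t]| = \sum_(t in X) P t.
Proof.
rewrite -sum1_card big_mkcond [RHS]big_mkcond /=; apply: eq_bigr => t _.
by rewrite !inE; case: (t \in X); case: (P t).
Qed.

Lemma card_sumb' (T : finType) (t : {set T}) (v : T) :
  #|t :\ v| = \sum_(u | u != v) (u \in t).
Proof.
rewrite -sum1_card big_mkcond [RHS]big_mkcond /=; apply: eq_bigr => u _.
by rewrite !inE; case: (u \in t); case: (u != v).
Qed.

Lemma star_sum (V : finType) (X : {set {set V}}) (v : V) :
  (forall t, t \in X -> #|t| = 3) ->
  \sum_(u | u != v) #|[set t in X | [set v; u] \subset t]| =
  2 * #|[set t in X | v \in t]|.
Proof.
move=> X3.
under eq_bigr => u _ do rewrite card_sumb.
rewrite exchange_big /= card_sumb big_distrr /=.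
apply: eq_big => // t tX.
under eq_bigr => u _ do rewrite subUset !sub1set.
case vt: (v \in t); last by rewrite muln0 big1.
rewrite muln1 -(card_sumb' t v).
by have := cardsD1 v t; rewrite vt X3 // add1n => -[<-].
Qed.
Lemma pair_of (T : finType) (e : {set T}) v :
  #|e| = 2 -> v \in e -> exists u, u != v /\ e = [set v; u].
Proof.
move/eqP/cards2P => [x [y [xy ->]]]; rewrite !inE => /orP [] /eqP ->.
  by exists y; rewrite eq_sym.
by exists x; split => //; rewrite setUC.
Qed.

Lemma edeg_le2 (V : finType) (F : {set {set V}}) :
  (forall e : {set V}, e \in edges F -> (edeg F e == 1) || (edeg F e == 2)) ->
  forall e : {set V}, #|e| = 2 -> edeg F e <= 2.
Proof.
move=> E12 e e2; case: (posnP (edeg F e)) => [-> // | /card_gt0P [t]].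
rewrite inE => /andP [tF et].
have : e \in edges F by rewrite inE e2 eqxx /=; apply/existsP; exists t; rewrite tF.
by move/E12 => /orP [] /eqP ->.
Qed.

Lemma dual_pair (V : finType) (F : {set {set V}}) t1 t2 :
  (forall e : {set V}, e \in edges F -> (edeg F e == 1) || (edeg F e == 2)) ->
  t1 \in F -> t2 \in F -> dual_adj t1 t2 ->
  [/\ t1 :&: t2 \in edges F, edeg F (t1 :&: t2) = 2 &
      [set t in F | t1 :&: t2 \subset t] = [set t1; t2]].
Proof.
move=> E12 t1F t2F /andP [t12 /eqP c2].
have eE : t1 :&: t2 \in edges F.
  by rewrite inE c2 eqxx /=; apply/existsP; exists t1; rewrite t1F subsetIl.
have sub : [set t1; t2] \subset [set t in F | t1 :&: t2 \subset t].
  by apply/subsetP => t; rewrite !inE => /orP [] /eqP ->;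
     rewrite ?t1F ?t2F ?subsetIl ?subsetIr.
have le2 := edeg_le2 E12 c2.
have ge2 := subset_leq_card sub; rewrite cards2 t12 in ge2.
have eq2 : edeg F (t1 :&: t2) = 2 by apply/eqP; rewrite eqn_leq le2 ge2.
split => //; apply/eqP; rewrite eq_sym eqEcard sub /=.
by move: eq2; rewrite /edeg => ->; rewrite cards2 t12.
Qed.

Lemma edge2_pair (V : finType) (F : {set {set V}}) e :
  (forall t, t \in F -> #|t| == 3) ->
  e \in edges F -> edeg F e = 2 ->
  exists t1 t2, [/\ t1 \in F, t2 \in F, t1 != t2,
     [set t in F | e \subset t] = [set t1; t2] & t1 :&: t2 = e].
Proof.
move=> F3 eE /eqP /cards2P [t1 [t2 [t12 E]]].
have : t1 \in [set t in F | e \subset t] by rewrite E set21.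
have : t2 \in [set t in F | e \subset t] by rewrite E set22.
rewrite !inE => /andP [t2F et2] /andP [t1F et1].
exists t1, t2; split => //.
have e2 : #|e| = 2 by move: eE; rewrite inE => /andP [/eqP -> _].
have sI : e \subset t1 :&: t2 by rewrite subsetI et1 et2.
apply/eqP; rewrite eq_sym eqEcard sI e2 /=.
rewrite leqNgt; apply/negP => c3.
have c3' : #|t1 :&: t2| = 3.
  apply/eqP; rewrite eqn_leq c3 andbT.
  by rewrite -(eqP (F3 _ t1F)) subset_leq_card // subsetIl.
have h1 : t1 :&: t2 = t1.
  by apply/eqP; rewrite eqEcard subsetIl c3' (eqP (F3 _ t1F)).
have h2 : t1 :&: t2 = t2.
  by apply/eqP; rewrite eqEcard subsetIr c3' (eqP (F3 _ t2F)).
by move: t12; rewrite -h1 h2 eqxx.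
Qed.

Lemma card_sumT (T : finType) (P : pred T) :
  #|[set t | P t]| = \sum_t P t.
Proof.
rewrite -sum1_card big_mkcond /=; apply: eq_bigr => t _.
by rewrite !inE; case: (P t).
Qed.

Lemma even_ones (T : finType) (v : T) (f : T -> nat) :
  (forall u, u != v -> f u <= 2) -> ~~ odd (\sum_(u | u != v) f u) ->
  ~~ odd #|[set u | (u != v) && (f u == 1)]|.
Proof.
move=> H; have -> : #|[set u | (u != v) && (f u == 1)]| =
   \sum_(u | u != v) (f u == 1).
  rewrite -sum1_card big_mkcond [RHS]big_mkcond /=; apply: eq_bigr => u _.
  by rewrite !inE; case: (u != v); case: (f u == 1).
have -> : \sum_(u | u != v) f u =
   \sum_(u | u != v) (f u == 1) + 2 * \sum_(u | u != v) (f u == 2).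
  rewrite big_distrr -big_split /=; apply: eq_bigr => u uv.
  by have := H u uv; case: (f u) => [|[|[|]]].
by rewrite oddD mul2n odd_double addbF.
Qed.

Lemma setU1_inj (T : finType) (v : T) : injective (fun u => [set v; u]).
Proof.
move=> u u' /= E.
have : u \in [set v; u'] by rewrite -E set22.
rewrite !inE => /orP [/eqP uv | /eqP //].
have : u' \in [set v; u] by rewrite E set22.
by rewrite uv !inE orbb => /eqP.
Qed.

Lemma bcount (V : finType) (F : {set {set V}}) :
  (forall t, t \in F -> #|t| == 3) ->
  (forall e : {set V}, e \in edges F -> (edeg F e == 1) || (edeg F e == 2)) ->
  #|[set v | bvert F v]| <= #|[set e | bedge F e]|.
Proof.
move=> F3 E12.
set B := [set e | bedge F e].
have B2 : forall e, e \in B -> #|e| = 2.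
  by move=> e; rewrite !inE /bedge inE => /andP [/andP [/eqP -> _] _].
pose N v := [set u | [set v; u] \in B].
have s1 : forall v, #|[set e in B | v \in e]| = #|N v|.
  move=> v; rewrite -(card_imset _ (@setU1_inj _ v)); apply: eq_card => e.
  rewrite [in LHS]inE; apply/andP/imsetP.
    move=> [eB ve]; have [u [_ E]] := pair_of (B2 _ eB) ve.
    by exists u => //; rewrite inE -E.
  by move=> [u]; rewrite inE => uB ->; rewrite uB set21.
have s2 : forall v, bvert F v -> 2 <= #|N v|.
  move=> v bv.
  have NE : N v = [set u | (u != v) && (edeg F [set v; u] == 1)].
    apply/setP => u; rewrite !inE /bedge; apply/andP/andP.
      move=> [eE d1]; split => //.
      by apply/negP => /eqP uv; move: eE; rewrite uv setUid inE cards1.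
    move=> [uv d1]; split => //.
    move: d1; rewrite /edeg => /cards1P [t E].
    have : t \in [set t0 in F | [set v; u] \subset t0] by rewrite E set11.
    rewrite !inE => /andP [tF st].
    rewrite cards2 (eq_sym v u) uv /=; apply/existsP; exists t; by rewrite tF.
  have ev : ~~ odd #|N v|.
    rewrite NE; apply: even_ones.
      move=> u uv; apply: edeg_le2 => //; by rewrite cards2 eq_sym uv.
    rewrite /edeg.
    have X3 : forall t, t \in F -> #|t| = 3 by move=> t /F3 /eqP.
    by rewrite (star_sum v X3) mul2n odd_double.
  have ge1 : 0 < #|N v|.
    move: bv => /existsP [e /andP [be ve]].
    have eB : e \in B by rewrite inE.
    have [u [_ E]] := pair_of (B2 _ eB) ve.
    by apply/card_gt0P; exists u; rewrite inE -E.
  by move: ev ge1; case: #|N v| => [|[|]].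
have dc : 2 * #|B| = \sum_v #|[set e in B | v \in e]|.
  rewrite -sum1_card big_distrr /=.
  under eq_bigr => e eB do rewrite muln1 -(B2 e eB).
  have ce : forall e : {set V}, #|e| = \sum_v (v \in e).
    by move=> e; rewrite -card_sumT; apply: eq_card => v; rewrite inE.
  under eq_bigr => e eB do rewrite ce.
  rewrite exchange_big /=; apply: eq_bigr => v _; by rewrite card_sumb.
rewrite -(leq_pmul2l (isT : 0 < 2)) dc card_sumT big_distrr /=.
apply: leq_sum => v _; rewrite s1.
by case bv: (bvert F v) => //=; rewrite muln1 s2.
Qed.

Lemma ivert_edeg2 (V : finType) (F : {set {set V}}) e v :
  (forall e : {set V}, e \in edges F -> (edeg F e == 1) || (edeg F e == 2)) ->
  e \in edges F -> v \in e -> ivert F v -> edeg F e = 2.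
Proof.
move=> E12 eE ve iv; case/orP: (E12 e eE) => /eqP // d1.
move: iv; rewrite /ivert => /negP; case; apply/existsP; exists e.
by rewrite /bedge eE d1 ve.
Qed.

Lemma dual_sym (V : finType) (x y : {set V}) : dual_adj x y = dual_adj y x.
Proof. by rewrite /dual_adj eq_sym setIC. Qed.

Lemma G_sym (V : finType) (S : {set {set V}}) x y : G_adj S x y = G_adj S y x.
Proof. by rewrite /G_adj dual_sym setIC. Qed.

Theorem theorem12 (V : finType) (F : {set {set V}})
    (b : V) (e0 : {set V}) (S : {set {set V}}) :
  triangulated_polygon F ->
  no_interior_crossing F ->
  bvert F b ->
  ((exists v, ivert F v) -> bridge_edge F e0 /\ b \in e0) ->
  S \subset H_edges F e0 ->
  is_tree (H_verts F b) (eadj S) ->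
  is_tree F (G_adj S).
Proof.
move=> [F3 Fcov E12 _ [dconn [eb beb] euler]] _ bb he0 SH [Hn0 Hconn Hnocyc].
have X3 : forall t, t \in F -> #|t| = 3 by move=> t /F3 /eqP.
have Hb : b \in H_verts F b by rewrite /H_verts setU11.
have Sfacts : forall e, e \in S -> [/\ #|e| = 2, e \subset H_verts F b,
    e \in edges F & edeg F e = 2].
  move=> e eS; have := subsetP SH _ eS; rewrite inE => /orP [ie | /andP [/eqP -> be0]].
  - move: ie => /andP [eE /forall_inP iv].
    have e2 : #|e| = 2 by move: eE; rewrite inE => /andP [/eqP ->].
    have [v ve] : exists v, v \in e.
      by apply/set0Pn; rewrite -card_gt0 e2.
    split => //; last exact: (ivert_edeg2 E12 eE ve (iv _ ve)).
    apply/subsetP => w we; rewrite /H_verts !inE iv ?orbT //.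
  - have := be0; rewrite /bridge_edge => /and3P [eE /exists_inP [w we iw] _].
    have [_ be] := he0 (ex_intro _ w iw).
    have e2 : #|e0| = 2 by move: eE; rewrite inE => /andP [/eqP ->].
    split => //; last exact: (ivert_edeg2 E12 eE we iw).
    apply/subsetP => z ze; rewrite /H_verts !inE.
    have [u [ub E]] := pair_of e2 be.
    case: (eqVneq z b) => //= zb.
    have zu : z = u by move: ze; rewrite E !inE (negbTE zb) => /eqP.
    move: we; rewrite E !inE => /orP [/eqP wb | /eqP wu].
      by move: iw; rewrite wb /ivert bb.
    by rewrite zu -wu.
set iE := [set e | iedge F e].
set bE := [set e | bedge F e].
have SiE : S \subset iE.
  apply/subsetP => e eS; have [_ _ eE d2] := Sfacts e eS.
  by rewrite inE /iedge eE d2.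
have cE : #|edges F| = #|bE| + #|iE|.
  rewrite -(cardsID [set e | edeg F e == 1] (edges F)); congr (_ + _).
    apply: eq_card => e; rewrite !inE /bedge inE.
    by case: (_ && _).
  apply: eq_card => e; case eE: (e \in edges F); rewrite in_setD [e \in iE]inE /iedge eE !inE ?andbT ?andbF //=.
  by case/orP: (E12 e eE) => /eqP ->.
have cV : #|[set v | bvert F v]| + #|[set v | ivert F v]| = #|V|.
  rewrite -(cardsC [set v | bvert F v]); congr (_ + _).
  by apply: eq_card => v; rewrite !inE.
have cH : #|H_verts F b| = #|[set v | ivert F v]|.+1.
  by rewrite /H_verts cardsU1 inE /ivert bb.
have cS : #|H_verts F b| - 1 <= #|S|.
  have [p [d Hp]] := tree_parent Hb Hconn.
  rewrite -(parent_card (p := p) Hb (fun v vA vb => (let: And3 _ _ h := Hp v vA vb in h))).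
  apply: subset_leq_card; apply/subsetP => f /imsetP [v /setD1P [vb vH] ->].
  have [_ /andP [_ h] _] := Hp v vH vb; by rewrite setUC.
have cB := bcount F3 E12.
have cnt : #|iE :\: S| <= #|F| - 1.
  rewrite cardsD (setIidPr SiE).
  move: euler cE cV cH cS cB; rewrite -/bE.
  set a1 := #|V|; set a2 := #|F|; set a3 := #|edges F|; set a4 := #|bE|.
  set a5 := #|iE|; set a6 := #|S|; set a7 := #|H_verts F b|.
  set a8 := #|[set v | bvert F v]|; set a9 := #|[set v | ivert F v]|.
  lia.
have Gconn : connectedb F (G_adj S).
  apply/forall_inP => x xF; apply/forall_inP => y yF.
  set X := [set t in F | connect (restr F (G_adj S)) x t].
  have XF : X \subset F by apply/subsetP => t; rewrite inE => /andP [].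
  have xX : x \in X by rewrite inE xF connect0.
  have Xcl : forall t1 t2, t1 \in X -> t2 \in F -> G_adj S t1 t2 -> t2 \in X.
    move=> t1 t2; rewrite !inE => /andP [t1F ct1] t2F g12.
    rewrite t2F /=; apply: connect_trans ct1 _; apply: connect1.
    by rewrite /restr t1F t2F g12.
  suff yX : y \in X by move: yX; rewrite inE => /andP [].
  apply/negPn/negP => yX.
  clearbody X.
  case: (boolP [exists t1 in X, exists t2 in F, (t2 \notin X) && dual_adj t1 t2]);
    last first.
    move=> nex.
    have cl : closed (restr F (@dual_adj V)) (mem X).
      move=> t1 t2 /and3P [t1F t2F d12].
      case t1X: (t1 \in X); case t2X: (t2 \in X) => //; exfalso; apply: (negP nex).
        by apply/exists_inP; exists t1 => //; apply/exists_inP; exists t2; rewrite ?t2X.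
      apply/exists_inP; exists t2 => //; apply/exists_inP; exists t1 => //.
      by rewrite t1X dual_sym.
    have := dconn; move/forall_inP => /(_ x xF) /forall_inP /(_ y yF) cxy.
    by have := closed_connect cl cxy; rewrite xX (negbTE yX).
  case/exists_inP => t1 t1X /exists_inP [t2 t2F /andP [t2X d12]].
  have t1F : t1 \in F by apply: (subsetP XF).
  have [eE ed2 eps] := dual_pair E12 t1F t2F d12.
  set e := t1 :&: t2 in eE ed2 eps.
  have eS : e \in S.
    apply/negPn/negP => enS; apply: (negP t2X); apply: (Xcl t1) => //.
    by rewrite /G_adj d12 enS.
  pose cX (f : {set V}) := #|[set t in X | f \subset t]|.
  have cXe : cX e = 1.
    rewrite /cX -(cards1 t1); apply: eq_card => t; rewrite !inE.
    apply/andP/eqP => [[tX et] | ->]; last by rewrite t1X subsetIl.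
    have : t \in [set t in F | e \subset t] by rewrite inE et (subsetP XF).
    rewrite eps !inE => /orP [/eqP // | /eqP tt2].
    by move: tX; rewrite tt2 (negbTE t2X).
  set D' := [set f in S | cX f == 1].
  have D'S : D' \subset S by apply/subsetP => f; rewrite inE => /andP [].
  have D'2 : forall f, f \in D' -> #|f| = 2.
    by move=> f /(subsetP D'S) /Sfacts [].
  have D'n0 : D' != set0 by apply/set0Pn; exists e; rewrite inE eS cXe.
  have SA : forall f, f \in S -> f \subset H_verts F b by move=> f /Sfacts [].
  have [z zb oddz] := forest_odd b Hnocyc SA D'S D'2 D'n0.
  have iz : ivert F z.
    have : 0 < #|[set u | [set z; u] \in D']| by move: oddz; case: #|_|.
    case/card_gt0P => u; rewrite inE => /(subsetP D'S) /SA /subsetP /(_ z (set21 _ _)).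
    by rewrite /H_verts !inE (negbTE zb).
  have NE : [set u | [set z; u] \in D'] =
            [set u | (u != z) && (cX [set z; u] == 1)].
    apply/setP => u; rewrite !inE; apply/andP/andP.
      move=> [fS c1]; split => //.
      apply/negP => /eqP uz; have [f2 _ _ _] := Sfacts _ fS.
      by move: f2; rewrite uz setUid cards1.
    move=> [uz c1]; split => //.
    move: (c1); rewrite /cX => /cards1P [t0 E0].
    have : t0 \in [set t in X | [set z; u] \subset t] by rewrite E0 set11.
    rewrite inE => /andP [t0X st0].
    have t0F : t0 \in F by apply: (subsetP XF).
    have fE : [set z; u] \in edges F.
      by rewrite inE cards2 (eq_sym z u) uz /=; apply/existsP; exists t0; rewrite t0F.
    have fd2 := ivert_edeg2 E12 fE (set21 z u) iz.
    have [s1 [s2 [s1F s2F s12 Eps Ei]]] := edge2_pair F3 fE fd2.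
    apply/negPn/negP => fnS.
    have g12 : G_adj S s1 s2.
      by rewrite /G_adj /dual_adj s12 Ei cards2 (eq_sym z u) uz fnS.
    have g21 : G_adj S s2 s1 by rewrite G_sym.
    have : t0 \in [set t in F | [set z; u] \subset t] by rewrite inE t0F st0.
    rewrite Eps !inE => /orP [] /eqP t0s.
    - have s2X : s2 \in X by apply: (Xcl s1) => //; rewrite -t0s.
      have : s2 \in [set t in X | [set z; u] \subset t].
        rewrite inE s2X /=.
        have : s2 \in [set t in F | [set z; u] \subset t] by rewrite Eps set22.
        by rewrite inE => /andP [].
      by rewrite E0 inE t0s eq_sym (negbTE s12).
    - have s1X : s1 \in X by apply: (Xcl s2) => //; rewrite -t0s.
      have : s1 \in [set t in X | [set z; u] \subset t].
        rewrite inE s1X /=.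
        have : s1 \in [set t in F | [set z; u] \subset t] by rewrite Eps set21.
        by rewrite inE => /andP [].
      by rewrite E0 inE t0s (negbTE s12).
  have X3' : forall t, t \in X -> #|t| = 3 by move=> t /(subsetP XF) /X3.
  have ev : ~~ odd #|[set u | (u != z) && (cX [set z; u] == 1)]|.
    apply: even_ones.
      move=> u uz; have h2 : #|[set z; u]| = 2 by rewrite cards2 (eq_sym z u) uz.
      apply: leq_trans (edeg_le2 E12 h2).
      rewrite /cX /edeg; apply: subset_leq_card; apply/subsetP => t; rewrite !inE => /andP [tX ->].
      by rewrite (subsetP XF).
    by rewrite /cX (star_sum z X3') mul2n odd_double.
  by move: ev; rewrite -NE oddz.
have Gnocyc : ~ has_cycle F (G_adj S).
  case=> s [us s3 sF cs].
  have [c cs0] : exists c, c \in s by case: s s3 {us sF cs} => // c s' _; exists c; rewrite mem_head.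
  have cF : c \in F by apply: (allP sF).
  have [p [d Hp]] := tree_parent cF Gconn.
  pose I := [set [set v; p v] | v in F :\ c].
  have cI : #|I| = #|F| - 1.
    exact: (parent_card cF (fun v vA vb => let: And3 _ _ h := Hp v vA vb in h)).
  pose psi (f : {set V}) := [set t in F | f \subset t].
  pose J := [set psi f | f in iE :\: S].
  have IJ : I \subset J.
    apply/subsetP => f /imsetP [v /setD1P [vc vF] ->].
    have [pF /andP [dpv nS] _] := Hp v vF vc.
    have [eE ed2 eps] := dual_pair E12 pF vF dpv.
    apply/imsetP; exists (p v :&: v).
      by rewrite in_setD nS inE /iedge eE ed2.
    by rewrite /psi eps setUC.
  have IeqJ : I = J.
    apply/eqP; rewrite eqEcard IJ cI /=; exact: leq_trans (leq_imset_card _ _) cnt.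
  have Gedge : forall v w, v \in F -> w \in F -> G_adj S v w -> [set v; w] \in I.
    move=> v w vF wF /andP [dvw nS]; rewrite IeqJ.
    have [eE ed2 eps] := dual_pair E12 vF wF dvw.
    apply/imsetP; exists (v :&: w); first by rewrite in_setD nS inE /iedge eE ed2.
    by rewrite /psi eps.
  have [v vs vmax] := @arg_maxnP _ c (fun i => i \in s) d cs0.
  have vF : v \in F by apply: (allP sF).
  have key : forall w, w \in s -> G_adj S v w -> w = p v.
    move=> w ws g; have wF : w \in F by apply: (allP sF).
    have vw : v != w by move: g => /andP [/andP []].
    have /imsetP [u /setD1P [uc uF] E'] := Gedge v w vF wF g.
    have [_ _ dlt] := Hp u uF uc.
    have : v \in [set u; p u] by rewrite -E' set21.
    have : w \in [set u; p u] by rewrite -E' set22.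
    rewrite !inE => /orP [] /eqP wu /orP [] /eqP vu.
    - by move: vw; rewrite vu wu eqxx.
    - by move: (vmax w ws); rewrite /= vu wu leqNgt dlt.
    - by rewrite wu vu.
    - by move: vw; rewrite vu wu eqxx.
  have [q Eq] : exists q, rot (index v s) s = v :: q.
    by exists (drop (index v s).+1 s ++ take (index v s) s); exact: rot_index vs.
  have cq : cycle (G_adj S) (v :: q) by rewrite -Eq rot_cycle.
  have uq : uniq (v :: q) by rewrite -Eq rot_uniq.
  have sq : 2 <= size q.
    by have := size_rot (index v s) s; rewrite Eq /= => h; rewrite -ltnS h.
  have mq : forall w, w \in q -> w \in s.
    by move=> w wq; rewrite -(mem_rot (index v s)) Eq inE wq orbT.
  case: q Eq cq uq sq mq => [|a [|a' q']] // Eq cq uq sq mq.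
  have : path (G_adj S) v (rcons [:: a, a' & q'] v) := cq.
  rewrite rcons_path => /andP [/andP [gva _] /= gwv].
  have h1 := key a (mq a (mem_head _ _)) gva.
  have h2 : last a' q' = p v.
    apply: key; last by rewrite G_sym.
    by apply: mq; rewrite inE mem_last orbT.
  move: uq; rewrite cons_uniq => /andP [_]; rewrite cons_uniq => /andP [an _].
  by move: an; rewrite h1 -h2 mem_last.
split => //.
by apply/set0Pn; move: beb => /andP []; rewrite inE => /andP [_ /exists_inP [t tF _]] _; exists t.
Qed.
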